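(* Let $n\ge 3$ be an integer, let $d_0,\dots,d_{n-1}>0$ (indices modulo $n$), and let $\lambda\in(\tfrac14,1)$. With $\alpha_j$, $\beta_i$ and the $n\times n$ matrix $Q_n$ defined as in the context, let $S_n$ be the $4n\times 4n$ matrix of the linear map $$(P_j^{0,0},P_j^{1,0},P_j^{0,1},P_j^{1,1})_{j=0}^{n-1}\mapsto(\overline P_j^{0,0},\overline P_j^{1,0},\overline P_j^{0,1},\overline P_j^{1,1})_{j=0}^{n-1}$$ given, for all $j$, by $$\overline P_j^{0,0}=\sum_{i=0}^{n-1}Q_{j,i}P_i^{0,0},$$ $$\overline P_j^{1,0}=\frac{3(2d_{j-1}+d_{j+1})P_j^{0,0}+3d_{j+1}P_{j-1}^{0,0}+(2d_{j-1}+d_{j+1})P_j^{1,0}+d_{j+1}P_{j-1}^{0,1}}{8(d_{j-1}+d_{j+1})},$$ $$\overline P_{j-1}^{0,1}=\frac{3d_{j-1}P_j^{0,0}+3(d_{j-1}+2d_{j+1})P_{j-1}^{0,0}+d_{j-1}P_j^{1,0}+(d_{j-1}+2d_{j+1})P_{j-1}^{0,1}}{8(d_{j-1}+d_{j+1})},$$ $$\overline P_j^{1,1}=\tfrac{9}{16}P_j^{0,0}+\tfrac{3}{16}P_j^{1,0}+\tfrac{3}{16}P_j^{0,1}+\tfrac{1}{16}P_j^{1,1}.$$ Then the eigenvalues of $S_n$ satisfy $\lambda_1=1>\lambda_2=\lambda_3=\lambda>|\lambda_k|$ for $k=4,5,\dots,4n$; that is, $1$ is a simple eigenvalue, $\lambda$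 is an eigenvalue of multiplicity two, and all other $4n-3$ eigenvalues (with multiplicity) have modulus less than $\lambda$.
   Context: Indices are modulo $n$. $\alpha_j=\frac{1}{n}\frac{d_{j-1}d_{j+2}}{(d_{j-1}+d_{j+1})(d_j+d_{j+2})}$, $\beta_i=\frac{d_{i-1}(d_{i-2}+d_{i+2})+d_{i+2}(d_{i-1}+d_{i+3})}{\sum_{k=0}^{n-1}(d_k+d_{k+2})(d_{k-1}+d_{k+3})}$, and $Q_n=(Q_{i,j})$ with $Q_{i,j}=(1-\lambda)\beta_j+2\lambda\alpha_i(1+2\cos\frac{2(j-i)\pi}{n})$ for $j\ne i$ and $Q_{i,i}=\lambda+(1-\lambda)\beta_i-2(n-3)\lambda\alpha_i$. The points $P_j^{a,b}$ are the control points in the two rings around the polygonal face (of valence $n$) in a tuned hybrid non-uniform subdivision mesh, and $S_n$ is the local subdivision matrix (after enough levels that neighboring knot intervals equal $d_j$); in the paper the unknowns are ordered as $P^{0,0}_0,\dots,P^{0,0}_{n-1}$, then the pairs $(P_j^{1,0},P_{j-1}^{0,1})$, then $P^{1,1}_0,\dots,P^{1,1}_{n-1}$, which gives a block lower-triangular matrix. *)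

(* Defs.v *)
From mathcomp Require Import all_boot all_order all_algebra.
From mathcomp Require Import all_classical all_reals all_analysis.
From mathcomp.real_closed Require Import complex.
Set Implicit Arguments. Unset Strict Implicit. Unset Printing Implicit Defensive.
Import Order.TTheory GRing.Theory Num.Theory.
Local Open Scope ring_scope.

Section Subdiv.
Variable R : realType.
Variable n : nat.
Variable d : 'I_n -> R.
Variable lam : R.

Definition dm (k : nat) : R := odflt 0 (omap d (insub (k %% n)%N)).

(* alpha_j; negative indices j-1 are written j + n - 1 (mod n) *)
Definition alpha (j : nat) : R :=
  n%:R^-1 * (dm (j + n - 1)%N * dm (j + 2)%N)
  / ((dm (j + n - 1) + dm (j + 1)) * (dm j + dm (j + 2))).

Definition beta (i : nat) : R :=
  (dm (i + n - 1) * (dm (i + n - 2) + dm (i + 2))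
   + dm (i + 2) * (dm (i + n - 1) + dm (i + 3)))
  / \sum_(k < n) (dm k + dm (k + 2)) * (dm (k + n - 1) + dm (k + 3)).

Definition Qe (i j : nat) : R :=
  if i == j then lam + (1 - lam) * beta i - 2 * (n%:R - 3) * lam * alpha i
  else (1 - lam) * beta j
       + 2 * lam * alpha i
         * (1 + 2 * cos (2 * (j%:R - i%:R) * pi / n%:R)).

Local Notation ind i t := ((i == t %% n)%N%:R : R).

(* Entry of S_n in row (block a, index j), column (block b, index i).
   Blocks: 0 = P^{0,0}, 1 = P^{1,0}, 2 = P^{0,1}, 3 = P^{1,1}.
   Row (1, j) gives \bar P_j^{1,0}; row (2, j') gives \bar P_{j'}^{0,1},
   i.e. the formula for \bar P_{j-1}^{0,1} with j = j' + 1. *)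
Definition Sentry (a j b i : nat) : R :=
  match a with
  | 0 => if b == 0 then Qe j i else 0
  | 1 =>
    let dmi := dm (j + n - 1) in let dpl := dm (j + 1) in
    let den := 8 * (dmi + dpl) in
    match b with
    | 0 => ind i j * (3 * (2 * dmi + dpl) / den)
           + ind i (j + n - 1) * (3 * dpl / den)
    | 1 => ind i j * ((2 * dmi + dpl) / den)
    | 2 => ind i (j + n - 1) * (dpl / den)
    | _ => 0
    end
  | 2 =>
    let dmi := dm j in let dpl := dm (j + 2) in
    let den := 8 * (dmi + dpl) in
    match b with
    | 0 => ind i (j + 1) * (3 * dmi / den)
           + ind i j * (3 * (dmi + 2 * dpl) / den)
    | 1 => ind i (j + 1) * (dmi / den)
    | 2 => ind i j * ((dmi + 2 * dpl) / den)
    | _ => 0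
    end
  | 3 =>
    match b with
    | 0 => ind i j * (9 / 16)
    | 1 => ind i j * (3 / 16)
    | 2 => ind i j * (3 / 16)
    | 3 => ind i j * (1 / 16)
    | _ => 0
    end
  | _ => 0
  end.

Definition Smat : 'M[R]_(4 * n) :=
  \matrix_(r, c) Sentry (r %/ n)%N (r %% n)%N (c %/ n)%N (c %% n)%N.

End Subdiv.

Local Open Scope complex_scope.
Definition SmatC (R : realType) (n : nat) (d : 'I_n -> R) (lam : R)
  : 'M[R[i]]_(4 * n) := map_mx (fun x : R => x%:C) (Smat d lam).

(* Main.v *)
Require Import Defs.
From mathcomp Require Import all_boot all_order all_algebra.
From mathcomp Require Import all_classical all_reals all_analysis.
From mathcomp.real_closed Require Import complex.
From mathcomp Require Import ring lra zify.
Import Order.TTheory GRing.Theory Num.Theory.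
Local Open Scope ring_scope.
Local Open Scope complex_scope.
Set Implicit Arguments. Unset Strict Implicit. Unset Printing Implicit Defensive.


Lemma char_poly_tr (F : comNzRingType) k (A : 'M[F]_k) :
  char_poly A^T = char_poly A.
Proof.
rewrite /char_poly -det_tr; congr (\det _).
by apply/matrixP => i j; rewrite !mxE eq_sym.
Qed.

Lemma char_poly_conj (F : fieldType) k (A P : 'M[F]_k) :
  P \in unitmx -> char_poly (P *m A *m invmx P) = char_poly A.
Proof.
move=> Pu; rewrite /char_poly /char_poly_mx.
have -> : 'X%:M - map_mx polyC (P *m A *m invmx P) =
   map_mx polyC P *m ('X%:M - map_mx polyC A) *m map_mx polyC (invmx P).
  rewrite mulmxBr mulmxBl mul_mx_scalar -scalemxAl -!map_mxM mulmxV //.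
  by rewrite map_mx1 scalemx1.
rewrite !det_mulmx !det_map_mx mulrC mulrA -rmorphM /= -det_mulmx mulVmx //.
by rewrite det1 rmorph1 mul1r.
Qed.

Lemma char_poly_lblock (F : comNzRingType) k l (A : 'M[F]_k) (C : 'M[F]_(l, k)) (D : 'M[F]_l) :
  char_poly (block_mx A 0 C D) = char_poly A * char_poly D.
Proof.
rewrite /char_poly /char_poly_mx map_block_mx /= map_mx0 (scalar_mx_block k l).
by rewrite opp_block_mx add_block_mx oppr0 addr0 det_lblock.
Qed.



Definition th (R : realType) (k : nat) : R := 2 * pi / k%:R.
Definition cs (R : realType) (k j : nat) : R := cos (j%:R * th R k).
Definition sn (R : realType) (k j : nat) : R := sin (j%:R * th R k).

Lemma th_sin_gt0 (R : realType) k : (2 < k)%N -> 0 < sin (th R k).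
Proof.
move=> k2; apply: sin_gt0_pi; rewrite /th.
have k0 : (0 : R) < k%:R by rewrite ltr0n; apply: leq_ltn_trans k2.
have pi0 := @pi_gt0 R.
apply/andP; split; first by rewrite divr_gt0 // mulr_gt0.
rewrite ltr_pdivrMr // mulrC ltr_pM2l //.
by rewrite (ltr_nat R 2 k).
Qed.


Definition om (R : realType) k (a : nat) : R[i] := (cos (a%:R * th R k)) +i* (sin (a%:R * th R k)).

Lemma omX (R : realType) k a j : (om R k a) ^+ j = om R k (a * j).
Proof.
elim: j => [|j IH]; first by rewrite expr0 muln0 /om mul0r cos0 sin0.
rewrite exprSr IH /om mulnS natrD mulrDl addrC cosD sinD.
apply/eqP; rewrite eq_complex /=; apply/andP; split; apply/eqP; ring.
Qed.

Lemma geo0 (F : fieldType) (w : F) k : w ^+ k = 1 -> w != 1 -> \sum_(j < k) w ^+ j = 0.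
Proof.
move=> wk w1; have := subrX1 w k; rewrite wk subrr => /esym/eqP.
by rewrite mulf_eq0 subr_eq0 (negbTE w1) /= => /eqP.
Qed.

Lemma cos_nat2pi (R : realType) a : cos (a%:R * pi *+ 2) = 1 :> R.
Proof.
elim: a => [|a IH]; first by rewrite mul0r mul0rn cos0.
by rewrite -addn1 natrD mulrDl mul1r mulrnDl cosD2pi.
Qed.

Lemma sin_nat2pi (R : realType) a : sin (a%:R * pi *+ 2) = 0 :> R.
Proof.
elim: a => [|a IH]; first by rewrite mul0r mul0rn sin0.
by rewrite -addn1 natrD mulrDl mul1r mulrnDl sinD2pi.
Qed.

Lemma omk (R : realType) k a : (0 < k)%N -> (om R k a) ^+ k = 1.
Proof.
move=> k0; rewrite omX /om /th.
have -> : (a * k)%:R * (2 * pi / k%:R) = a%:R * pi *+ 2 :> R.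
  rewrite natrM -mulr_natl; field; by rewrite pnatr_eq0 -lt0n.
by rewrite cos_nat2pi sin_nat2pi.
Qed.

Lemma om_neq1 (R : realType) k : (2 < k)%N -> om R k 1 != 1.
Proof.
move=> k2; apply/eqP => /(congr1 (@complex.Im R)) /=.
by rewrite mul1r => /eqP; rewrite gt_eqF // th_sin_gt0.
Qed.

Lemma om2_neq1 (R : realType) k : (2 < k)%N -> om R k 2 != 1.
Proof.
move=> k2; rewrite -[2%N]/(1 * 2)%N -omX; apply/eqP => /eqP.
rewrite -subr_eq0 subr_sqr_1 mulf_eq0 subr_eq0 (negbTE (om_neq1 _ k2)) /=.
rewrite addr_eq0 => /eqP /(congr1 (@complex.Im R)) /=.
rewrite mul1r => /eqP; rewrite oppr0 gt_eqF // th_sin_gt0 //.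
Qed.

Lemma sum_om (R : realType) k a : (2 < k)%N -> (a == 1 \/ a == 2)%N ->
  \sum_(j < k) om R k (a * j) = 0.
Proof.
move=> k2 ha; rewrite -(eq_bigr _ (fun j _ => omX _ _ _ _)).
apply: geo0; first by apply: omk; apply: ltn_trans k2.
by case: ha => /eqP ->; [exact: om_neq1 | exact: om2_neq1].
Qed.

Lemma sum_cos_sin (R : realType) k a : (2 < k)%N -> (a == 1 \/ a == 2)%N ->
  \sum_(j < k) cos ((a * j)%:R * th R k) = 0 /\
  \sum_(j < k) sin ((a * j)%:R * th R k) = 0.
Proof.
move=> k2 ha; have := @sum_om R k a k2 ha.
have -> : \sum_(j < k) om R k (a * j) =
   (\sum_(j < k) cos ((a * j)%:R * th R k)) +i* (\sum_(j < k) sin ((a * j)%:R * th R k)).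
  elim/big_rec3: _ => [|j x y z _ ->] //.
move=> /eqP; rewrite eq_complex /= => /andP [/eqP -> /eqP ->]; done.
Qed.

Lemma sum_cs (R : realType) k : (2 < k)%N -> \sum_(j < k) cs R k j = 0.
Proof. by move=> k2; case: (@sum_cos_sin R k 1 k2 (or_introl (eqxx _))) => + _; under eq_bigr do rewrite mul1n. Qed.

Lemma sum_sn (R : realType) k : (2 < k)%N -> \sum_(j < k) sn R k j = 0.
Proof. by move=> k2; case: (@sum_cos_sin R k 1 k2 (or_introl (eqxx _))) => _; under eq_bigr do rewrite mul1n. Qed.

Lemma two_th (R : realType) k j : (2 * j)%:R * th R k = (j%:R * th R k) *+ 2.
Proof. by rewrite natrM -mulrA mulr_natl. Qed.

Lemma sum_cs2 (R : realType) k : (2 < k)%N -> \sum_(j < k) cs R k j * cs R k j = k%:R / 2.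
Proof.
move=> k2; case: (@sum_cos_sin R k 2 k2 (or_intror (eqxx _))) => + _.
under eq_bigr do rewrite two_th cos_mulr2n.
rewrite big_split /= sumrN sumr_const card_ord sumrMnl => /eqP.
rewrite subr_eq0 => /eqP h.
rewrite /cs; under eq_bigr do rewrite -expr2.
apply: (@mulIf _ 2); first by rewrite pnatr_eq0.
by rewrite mulfVK ?pnatr_eq0 // mulr_natr h.
Qed.

Lemma sum_sncs (R : realType) k : (2 < k)%N -> \sum_(j < k) sn R k j * cs R k j = 0.
Proof.
move=> k2; case: (@sum_cos_sin R k 2 k2 (or_intror (eqxx _))) => _.
under eq_bigr do rewrite two_th sin_mulr2n.
rewrite sumrMnl => /eqP; rewrite mulrn_eq0 /= => /eqP h.
rewrite -[RHS]h; rewrite /sn /cs; under eq_bigr do rewrite mulrC; done.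
Qed.

Lemma sum_sn2 (R : realType) k : (2 < k)%N -> \sum_(j < k) sn R k j * sn R k j = k%:R / 2.
Proof.
move=> k2.
have -> : \sum_(j < k) sn R k j * sn R k j = \sum_(j < k) (1 - cs R k j * cs R k j).
  by apply: eq_bigr => j _; rewrite /sn /cs -!expr2 sin2cos2.
rewrite sumrB sum_cs2 // sumr_const card_ord.
by field.
Qed.

Lemma cos_arg (R : realType) k (i j : nat) :
  cos (2 * (j%:R - i%:R) * pi / k%:R) = cs R k j * cs R k i + sn R k j * sn R k i.
Proof.
rewrite /cs /sn -cosB; congr cos; rewrite /th; ring.
Qed.


Lemma dm_mod (R : realType) n (d : 'I_n -> R) t : dm d (t %% n) = dm d t.
Proof. by rewrite /dm modn_mod. Qed.

Lemma dmE (R : realType) n (d : 'I_n -> R) t1 t2 : (t1 = t2 + n)%N -> dm d t1 = dm d t2.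
Proof. by move=> ->; rewrite -dm_mod modnDr dm_mod. Qed.

Lemma dm_gt0 (R : realType) n (d : 'I_n -> R) t : (0 < n)%N -> (forall j, 0 < d j) -> 0 < dm d t.
Proof.
move=> n0 hd; rewrite /dm; case: insubP => [u _ _ /=|]; first exact: hd.
by rewrite ltn_pmod.
Qed.

Lemma sum_shift (R : realType) n (F : nat -> R) c : (forall t, F (t + n)%N = F t) ->
  \sum_(i < n) F (i + c)%N = \sum_(i < n) F i.
Proof.
move=> hF; elim: c => [|c IH]; first by under eq_bigr do rewrite addn0.
rewrite -IH; case: n hF IH => [|n] hF _; first by rewrite !big_ord0.
rewrite big_ord_recr big_ord_recl /= addrC add0n addnS -addSn addnC hF.
congr (_ + _); apply: eq_bigr => i _; by rewrite /bump /= add1n addSnnS.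
Qed.

Lemma sum_pos (R : realType) n (F : 'I_n -> R) : (0 < n)%N -> (forall i, 0 < F i) -> 0 < \sum_(i < n) F i.
Proof.
move=> n0 hF; rewrite (bigD1 (Ordinal n0)) //=.
apply: (lt_le_trans (hF (Ordinal n0))); rewrite lerDl.
by apply: sumr_ge0 => i _; exact: ltW.
Qed.

Lemma sum_beta (R : realType) n (d : 'I_n -> R) : (3 <= n)%N -> (forall j, 0 < d j) ->
  \sum_(i < n) beta d i = 1.
Proof.
move=> n3 hd; have n0 : (0 < n)%N by lia.
rewrite /beta -mulr_suml.
set Den := (X in _ / X).
suff -> : \sum_(i < n) (dm d (i + n - 1) * (dm d (i + n - 2) + dm d (i + 2)) +
        dm d (i + 2) * (dm d (i + n - 1) + dm d (i + 3))) = Den.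
  apply: divff; rewrite gt_eqF //.
  apply: sum_pos => // i; apply: mulr_gt0; apply: addr_gt0; exact: dm_gt0.
rewrite /Den.
under eq_bigr do rewrite mulrDr mulrDr.
under [RHS]eq_bigr do rewrite mulrDl !mulrDr.
rewrite !big_split /=.
have -> : \sum_(i < n) dm d (i + n - 1) * dm d (i + n - 2) =
          \sum_(i < n) dm d i * dm d (i + n - 1).
  rewrite -(@sum_shift R n (fun i => dm d i * dm d (i + n - 1)) (n - 1)); last first.
    by move=> t; rewrite (@dmE _ _ _ (t + n) t) // (@dmE _ _ _ (t + n + n - 1) (t + n - 1)) //; lia.
  apply: eq_bigr => i _; congr (_ * _); first by congr dm; lia.
  by symmetry; apply: dmE; lia.
have -> : \sum_(i < n) dm d (i + n - 1) * dm d (i + 2) =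
          \sum_(i < n) dm d i * dm d (i + 3).
  rewrite -(@sum_shift R n (fun i => dm d i * dm d (i + 3)) (n - 1)); last first.
    by move=> t; rewrite (@dmE _ _ _ (t + n) t) // (@dmE _ _ _ (t + n + 3) (t + 3)) //; lia.
  apply: eq_bigr => i _; congr (_ * _); first by congr dm; lia.
  by symmetry; apply: dmE; lia.
by rewrite -!addrA; congr (_ + _); rewrite addrCA.
Qed.


Lemma Qe_dec (R : realType) n (d : 'I_n -> R) lam (i j : nat) :
  Qe d lam i j = (1 - lam) * beta d j
    + 2 * lam * alpha d i * (1 + 2 * (cs R n j * cs R n i + sn R n j * sn R n i))
    + (i == j)%:R * (lam - 2 * n%:R * lam * alpha d i).
Proof.
rewrite /Qe; case: ifP => [/eqP <-|h]; rewrite ?eqxx ?h.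
  have -> : cs R n i * cs R n i + sn R n i * sn R n i = 1 by rewrite -!expr2 cos2Dsin2.
  rewrite /=; ring.
rewrite cos_arg /=; ring.
Qed.

Lemma sum_delta (R : realType) n (g : 'I_n -> R) (i : 'I_n) :
  \sum_(j < n) ((i : nat) == (j : nat))%:R * g j = g i.
Proof.
rewrite (bigD1 i) //= eqxx mul1r big1 ?addr0 // => j hj.
by rewrite (_ : ((i : nat) == j) = false) ?mul0r //; apply/negbTE; rewrite eq_sym.
Qed.

Lemma Q_inv (R : realType) n (d : 'I_n -> R) lam (i : 'I_n) (a b e : R) :
  (3 <= n)%N -> (forall j, 0 < d j) ->
  \sum_(j < n) (a + b * cs R n j + e * sn R n j) * Qe d lam i j =
  lam * (a + b * cs R n i + e * sn R n i) +
  (1 - lam) * \sum_(j < n) beta d j * (a + b * cs R n j + e * sn R n j).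
Proof.
move=> n3 hd; have n2 : (2 < n)%N by [].
set K := 2 * lam * alpha d i.
set X := lam - 2 * n%:R * lam * alpha d i.
have pt : forall j : 'I_n, (a + b * cs R n j + e * sn R n j) * Qe d lam i j =
   (1 - lam) * (beta d j * (a + b * cs R n j + e * sn R n j))
   + K * a + (K * b + 2 * K * a * cs R n i) * cs R n j + (K * e + 2 * K * a * sn R n i) * sn R n j
   + (2 * K * b * cs R n i) * (cs R n j * cs R n j)
   + (2 * K * (e * cs R n i + b * sn R n i)) * (sn R n j * cs R n j)
   + (2 * K * e * sn R n i) * (sn R n j * sn R n j)
   + ((i : nat) == (j : nat))%:R * ((a + b * cs R n j + e * sn R n j) * X).
  move=> j; rewrite Qe_dec -/K -/X; ring.
rewrite (eq_bigr _ (fun j _ => pt j)) !big_split /=.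
rewrite (@sum_delta R n (fun j : 'I_n => (a + b * cs R n j + e * sn R n j) * X) i).
rewrite -!mulr_sumr sum_sncs // sum_cs2 // sum_sn2 // sum_cs // sum_sn // sumr_const card_ord.
by rewrite /K /X; field.
Qed.


Lemma sum_delta2 (F : nzRingType) n (g : 'I_n -> F) (i : 'I_n) :
  \sum_(j < n) ((j : nat) == (i : nat))%:R * g j = g i.
Proof.
rewrite (bigD1 i) //= eqxx mul1r big1 ?addr0 // => j hj.
by rewrite (_ : ((j : nat) == i) = false) ?mul0r //; apply/negbTE.
Qed.

Lemma Q_row (R : realType) n (d : 'I_n -> R) lam (x : 'I_n -> R[i]) (i : 'I_n) :
  \sum_(j < n) (Qe d lam j i)%:C * x j =
    ((1 - lam) * beta d i)%:C * \sum_(j < n) x j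
  + \sum_(j < n) (2 * lam * alpha d j)%:C * x j
  + 2 * (cs R n i)%:C * \sum_(j < n) (2 * lam * alpha d j * cs R n j)%:C * x j
  + 2 * (sn R n i)%:C * \sum_(j < n) (2 * lam * alpha d j * sn R n j)%:C * x j
  + (lam - 2 * n%:R * lam * alpha d i)%:C * x i.
Proof.
have pt : forall j : 'I_n, (Qe d lam j i)%:C * x j =
    ((1 - lam) * beta d i)%:C * x j
  + (2 * lam * alpha d j)%:C * x j
  + 2 * (cs R n i)%:C * ((2 * lam * alpha d j * cs R n j)%:C * x j)
  + 2 * (sn R n i)%:C * ((2 * lam * alpha d j * sn R n j)%:C * x j)
  + ((j : nat) == (i : nat))%:R * ((lam - 2 * n%:R * lam * alpha d j)%:C * x j).
  move=> j; rewrite Qe_dec.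
  rewrite !(rmorphD, rmorphM, rmorphB, rmorph_nat, rmorph1) /=.
  ring.
rewrite (eq_bigr _ (fun j _ => pt j)) !big_split /=.
rewrite -!mulr_sumr.
by rewrite (@sum_delta2 _ n (fun j : 'I_n => (lam - 2 * n%:R * lam * alpha d j)%:C * x j) i).
Qed.

Lemma alpha_bnd (R : realType) n (d : 'I_n -> R) (i : nat) : (0 < n)%N -> (forall j, 0 < d j) ->
  0 < n%:R * alpha d i < 1.
Proof.
move=> n0 hd; rewrite /alpha mulrA mulrA divff ?pnatr_eq0 -?lt0n // mul1r.
have p1 := dm_gt0 (i + n - 1) n0 hd; have p2 := dm_gt0 (i + 2) n0 hd.
have p3 := dm_gt0 (i + 1) n0 hd; have p4 := dm_gt0 i n0 hd.
set a := dm d (i + n - 1) in p1 *; set b := dm d (i + 2) in p2 *.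
set c := dm d (i + 1) in p3 *; set e := dm d i in p4 *.
have q0 : 0 < (a + c) * (e + b) by apply: mulr_gt0; apply: addr_gt0.
rewrite divr_gt0 ?mulr_gt0 ?addr_gt0 //= ltr_pdivrMr // mul1r.
rewrite -subr_gt0; have -> : (a + c) * (e + b) - a * b = a * e + c * e + c * b by ring.
by rewrite !addr_gt0 // mulr_gt0.
Qed.

Lemma normC_real (R : realType) (r : R) : `|r%:C| = `|r|%:C.
Proof. by rewrite normc_def /= expr0n /= addr0 sqrtr_sqr. Qed.

Lemma xx_ge0 (R : realType) (x : R[i]) : exists r : R, x * conjc x = r%:C /\ 0 <= r /\ (x != 0 -> 0 < r).
Proof.
have h := mulcJ_ge0 x.
have /complex_realP [r hr] : x * conjc x \is Num.real by exact: ger0_real.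
exists r; split => //; split; first by rewrite -ler0c -hr.
move=> x0; rewrite lt_def -ler0c -hr h andbT.
apply/eqP => r0; move: hr; rewrite r0 => /eqP; rewrite mulf_eq0 conjc_eq0 orbb.
by rewrite (negbTE x0).
Qed.

Lemma Q_eig (R : realType) n (d : 'I_n -> R) lam (x : 'I_n -> R[i]) (z : R[i]) :
  (3 <= n)%N -> (forall j, 0 < d j) -> 0 < lam ->
  (exists j, x j != 0) ->
  \sum_(j < n) x j = 0 ->
  \sum_(j < n) (cs R n j)%:C * x j = 0 ->
  \sum_(j < n) (sn R n j)%:C * x j = 0 ->
  (forall i : 'I_n, \sum_(j < n) (Qe d lam j i)%:C * x j = z * x i) ->
  `|z| < lam%:C.
Proof.
move=> n3 hd lam0 [j0 xj0] s0 s1 s2 E.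
have n0 : (0 < n)%N by lia.
set U0 := \sum_(j < n) (2 * lam * alpha d j)%:C * x j.
set U1 := \sum_(j < n) (2 * lam * alpha d j * cs R n j)%:C * x j.
set U2 := \sum_(j < n) (2 * lam * alpha d j * sn R n j)%:C * x j.
have hr : forall i : 'I_n, z * x i = U0 + 2 * (cs R n i)%:C * U1 + 2 * (sn R n i)%:C * U2
     + (lam - 2 * n%:R * lam * alpha d i)%:C * x i.
  by move=> i; rewrite -E Q_row s0 mulr0 add0r.
have c0 : \sum_(i < n) conjc (x i) = 0 by rewrite -rmorph_sum s0; apply/eqP; rewrite conjc_eq0.
have c1 : \sum_(i < n) (cs R n i)%:C * conjc (x i) = 0.
  under eq_bigr do rewrite -[(cs R n _)%:C]conjc_real -rmorphM.
  by rewrite -rmorph_sum s1; apply/eqP; rewrite conjc_eq0.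
have c2 : \sum_(i < n) (sn R n i)%:C * conjc (x i) = 0.
  under eq_bigr do rewrite -[(sn R n _)%:C]conjc_real -rmorphM.
  by rewrite -rmorph_sum s2; apply/eqP; rewrite conjc_eq0.
pose N := \sum_(i < n) x i * conjc (x i).
pose A := \sum_(i < n) (n%:R * alpha d i)%:C * (x i * conjc (x i)).
have key : z * N = lam%:C * N - 2 * lam%:C * A.
  rewrite /N /A mulr_sumr.
  have pt : forall i : 'I_n, z * (x i * conjc (x i)) =
    U0 * conjc (x i) + 2 * U1 * ((cs R n i)%:C * conjc (x i)) + 2 * U2 * ((sn R n i)%:C * conjc (x i))
    + lam%:C * (x i * conjc (x i)) - 2 * lam%:C * ((n%:R * alpha d i)%:C * (x i * conjc (x i))).
    move=> i; rewrite mulrA hr; set a := alpha d i; rewrite !(rmorphD, rmorphM, rmorphB, rmorphN, rmorph_nat, rmorph1) /=; ring.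
  rewrite (eq_bigr _ (fun i _ => pt i)) sumrB !big_split /= -!mulr_sumr c0 c1 c2.
  by rewrite !mulr0 !add0r.
pose p i := complex.Re (x i * conjc (x i)).
have hp : forall i, x i * conjc (x i) = (p i)%:C /\ 0 <= p i /\ (x i != 0 -> 0 < p i).
  move=> i; have [r [hrr [r0 r1]]] := xx_ge0 (x i).
  by rewrite /p hrr /=.
have hN : N = (\sum_(i < n) p i)%:C.
  by rewrite rmorph_sum; apply: eq_bigr => i _; case: (hp i).
have hA : A = (\sum_(i < n) n%:R * alpha d i * p i)%:C.
  rewrite rmorph_sum; apply: eq_bigr => i _; case: (hp i) => -> _.
  by rewrite [RHS]rmorphM.
set nr := \sum_(i < n) p i in hN; set ar := \sum_(i < n) n%:R * alpha d i * p i in hA.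
have [pj0 _] := (hp j0).2; have pj := (hp j0).2.2 xj0.
have nr0 : 0 < nr.
  rewrite /nr (bigD1 j0) //=; apply: (lt_le_trans pj); rewrite lerDl.
  by apply: sumr_ge0 => i _; case: (hp i) => _ [].
have ar0 : 0 < ar.
  rewrite /ar (bigD1 j0) //=; apply: (lt_le_trans (y := n%:R * alpha d j0 * p j0)).
    by rewrite mulr_gt0 // (andP (alpha_bnd j0 n0 hd)).1.
  rewrite lerDl; apply: sumr_ge0 => i _; rewrite mulr_ge0 //; last by case: (hp i) => _ [].
  by rewrite ltW // (andP (alpha_bnd i n0 hd)).1.
have arn : ar < nr.
  rewrite /ar /nr (bigD1 j0) //= [X in _ < X](bigD1 j0) //=.
  apply: ltr_leD.
    by rewrite gtr_pMl // (andP (alpha_bnd j0 n0 hd)).2.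
  apply: ler_sum => i _; rewrite ler_piMl //; first by case: (hp i) => _ [].
  by rewrite ltW // (andP (alpha_bnd i n0 hd)).2.
have nrC : nr%:C != 0 by rewrite eq_complex /= negb_and gt_eqF.
have hz : z = ((lam * nr - 2 * lam * ar) / nr)%:C.
  apply: (@mulIf _ nr%:C) => //.
  rewrite -hN key hN hA -[RHS]rmorphM divfK ?gt_eqF //.
  by rewrite [RHS]rmorphB /= !rmorphM /= rmorph_nat.
rewrite hz normC_real ltcR normrM normfV (gtr0_norm nr0) ltr_pdivrMr // ltr_norml; apply/andP; split; nra.
Qed.


Lemma sum3 (R : realType) n (F : nat -> R) :
  \sum_(k < (3 * n)%N) F k = \sum_(l < n) F l + \sum_(l < n) F (n + l)%N + \sum_(l < n) F (2 * n + l)%N.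
Proof.
rewrite -!(big_mkord xpredT) (big_cat_nat _ (n := n)) ?leq_pmull //=.
rewrite [X in _ + X](big_cat_nat _ (n := 2 * n)) /=; [|lia|lia].
rewrite -addrA; congr (_ + _); congr (_ + _).
  rewrite -{1}[n]add0n big_addn; have -> : (2 * n - n = n)%N by lia.
  by rewrite big_mkord; apply: eq_bigr => i _; rewrite addnC.
rewrite -[(2 * n)%N]add0n big_addn; have -> : (3 * n - (0 + 2 * n) = n)%N by lia.
by rewrite big_mkord; apply: eq_bigr => i _; rewrite addnC.
Qed.

Lemma sum_ind (R : realType) n t (c : R) : (0 < n)%N ->
  \sum_(l < n) (((l : nat) == t %% n)%N%:R * c) = c.
Proof.
move=> n0; rewrite (bigD1 (Ordinal (ltn_pmod t n0))) //= eqxx mul1r big1 ?addr0 //.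
move=> l hl; rewrite (_ : ((l : nat) == t %% n)%N = false) ?mul0r //.
by apply/negbTE; apply: contra hl => /eqP h; apply/eqP; apply: val_inj.
Qed.

Definition wt (R : realType) (b : nat) : R := if b == 3%N then 4 else 1.

Lemma divmod_blk n b (l : 'I_n) : ((b * n + l) %/ n = b /\ (b * n + l) %% n = l)%N.
Proof.
have n0 : (0 < n)%N by case: l => l /=; case: n => //.
by rewrite divnMDl // modnMDl divn_small ?modn_small // addn0.
Qed.

Lemma rowsum_split (R : realType) n (d : 'I_n -> R) lam (a j : nat) : (0 < n)%N ->
  \sum_(k < (3 * n)%N) Sentry d lam a j (1 + k %/ n) (k %% n) * wt R (1 + k %/ n) =
  \sum_(l < n) Sentry d lam a j 1 l + \sum_(l < n) Sentry d lam a j 2 l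
  + 4 * \sum_(l < n) Sentry d lam a j 3 l.
Proof.
move=> n0; rewrite (@sum3 R n (fun k => Sentry d lam a j (1 + k %/ n) (k %% n) * wt R (1 + k %/ n))) mulr_sumr; congr (_ + _ + _); apply: eq_bigr => l _.
- by have [] := divmod_blk 0 l; rewrite mul0n add0n => -> ->; rewrite /wt /= mulr1.
- by have [] := divmod_blk 1 l; rewrite mul1n => -> ->; rewrite /wt /= mulr1.
- by have [] := divmod_blk 2 l => -> ->; rewrite /wt /= mulrC.
Qed.

Lemma rowsum_le (R : realType) n (d : 'I_n -> R) lam (a j : nat) : (0 < n)%N ->
  (forall j, 0 < d j) -> (a == 1 \/ a == 2 \/ a == 3)%N ->
  \sum_(k < (3 * n)%N) Sentry d lam a j (1 + k %/ n) (k %% n) * wt R (1 + k %/ n) <= wt R a / 4.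
Proof.
move=> n0 hd ha; rewrite rowsum_split //.
case: ha => [/eqP->|[/eqP->|/eqP->]]; rewrite /Sentry /= !sum_ind // ?big1 // /wt /=.
- have p1 := dm_gt0 (j + n - 1) n0 hd; have p2 := dm_gt0 (j + 1) n0 hd.
  rewrite le_eqVlt; apply/orP; left; apply/eqP; field; rewrite gt_eqF //; exact: addr_gt0.
- have q1 := dm_gt0 j n0 hd; have q2 := dm_gt0 (j + 2) n0 hd.
  rewrite le_eqVlt; apply/orP; left; apply/eqP; field; rewrite gt_eqF //; exact: addr_gt0.
- lra.
Qed.

Lemma Sentry_ge0 (R : realType) n (d : 'I_n -> R) lam (a j b l : nat) : (0 < n)%N ->
  (forall j, 0 < d j) -> (0 < a)%N -> 0 <= Sentry d lam a j b l.
Proof.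
move=> n0 hd a0.
have P := fun t => dm_gt0 t n0 hd.
case: a a0 => [//|[|[|[|a]]]] _ /=; case: b => [|[|[|[|b]]]] /=;
  rewrite ?mulr_ge0 ?addr_ge0 ?divr_ge0 ?mulr_ge0 ?addr_ge0 ?ler0n //. all: try (apply: ltW; exact: P). all: rewrite ?invr_ge0 ?mulr_ge0 ?addr_ge0 //; apply: ltW; exact: P.
Qed.


Lemma rV_neq0 (F : nzRingType) k (v : 'rV[F]_k) : v != 0 -> exists j, v 0 j != 0.
Proof.
move=> v0; apply/existsP; apply: contraR v0 => /existsPn h.
apply/eqP/matrixP => i j; rewrite ord1 mxE; apply/eqP; exact: negbNE (h j).
Qed.

Lemma B_eig (R : realType) n (d : 'I_n -> R) lam (B : 'M[R[i]]_(3 * n)) (z : R[i]) :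
  (0 < n)%N -> (forall j, 0 < d j) -> 1 / 4 < lam ->
  (forall i k : 'I_(3 * n), B i k = (Sentry d lam (1 + i %/ n) (i %% n) (1 + k %/ n) (k %% n))%:C) ->
  eigenvalue B z -> `|z| < lam%:C.
Proof.
move=> n0 hd hlam hB /eigenvalueP [v hv v0].
have [k0 vk0] := rV_neq0 v0.
pose s (i k : 'I_(3 * n)) := Sentry d lam (1 + i %/ n) (i %% n) (1 + k %/ n) (k %% n).
pose w (k : 'I_(3 * n)) := wt R (1 + k %/ n).
have s0 : forall i k, 0 <= s i k by move=> i k; apply: Sentry_ge0.
have w0 : forall k, 0 < w k by move=> k; rewrite /w /wt; case: ifP.
have hrow : forall i, \sum_(k < 3 * n) s i k * w k <= w i / 4.
  move=> i; apply: rowsum_le => //.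
  have : (i %/ n < 3)%N by rewrite ltn_divLR // mulnC.
  by case: (i %/ n)%N => [|[|[|]]] //= _; auto.
have heq : forall k, z * v 0 k = \sum_(i < 3 * n) v 0 i * (s i k)%:C.
  move=> k; move/matrixP: hv => /(_ 0 k); rewrite !mxE => <-.
  by apply: eq_bigr => i _; rewrite hB.
pose W := \sum_(k < 3 * n) (w k)%:C * `|v 0 k|.
have W0 : 0 < W.
  rewrite /W (bigD1 k0) //=; apply: (lt_le_trans (y := (w k0)%:C * `|v 0 k0|)).
    by rewrite mulr_gt0 ?normr_gt0 // ltcR.
  rewrite lerDl; apply: sumr_ge0 => k _; rewrite mulr_ge0 // ler0c ltW //.
have : `|z| * W <= W / 4.
  rewrite /W mulr_sumr.
  apply: (le_trans (y := \sum_(k < 3 * n) (w k)%:C * \sum_(i < 3 * n) `|v 0 i| * (s i k)%:C)).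
    apply: ler_sum => k _; rewrite mulrCA -normrM heq; apply: ler_wpM2l; first by rewrite ler0c ltW.
    apply: (le_trans (ler_norm_sum _ _ _)); apply: ler_sum => i _.
    by rewrite normrM normC_real (ger0_norm (s0 i k)).
  under eq_bigr do rewrite mulr_sumr.
  rewrite exchange_big /= mulr_suml; apply: ler_sum => i _.
  rewrite (mulrC (w i)%:C) -mulrA; under eq_bigr do rewrite mulrCA.
  rewrite -mulr_sumr; apply: ler_wpM2l => //.
  have -> : (w i)%:C / 4 = (w i / 4)%:C by rewrite fmorph_div rmorph_nat.
  under eq_bigr do rewrite -rmorphM.
  rewrite -rmorph_sum lecR; under eq_bigr do rewrite mulrC; exact: hrow.
rewrite [W / 4]mulrC ler_pM2r // => hz.
apply: (le_lt_trans hz).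
have -> : (4 : R[i])^-1 = ((1 / 4 : R))%:C by rewrite fmorph_div rmorph1 rmorph_nat div1r.
by rewrite ltcR.
Qed.


Definition tv (R : realType) m (r j : nat) : R :=
  (r == 0%N)%:R + (r == 1%N)%:R * cs R (3 + m) j + (r == 2%N)%:R * sn R (3 + m) j.

Definition T1 (R : realType) m : 'M[R]_(3, 3 + m) := \matrix_(r, j) tv R m r j.

Definition Tm (R : realType) m : 'M[R]_(3 + m) := col_mx (T1 R m) (row_mx 0 1%:M).

Definition Qt (R : realType) m (d : 'I_(3 + m) -> R) lam : 'M[R]_(3 + m) :=
  \matrix_(i, j) Qe d lam j i.

Definition X3 (R : realType) m (d : 'I_(3 + m) -> R) lam : 'M[R]_3 :=
  \matrix_(r, t) (lam * ((t : nat) == (r : nat))%:R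
     + ((t : nat) == 0%N)%:R * ((1 - lam) * \sum_(j < 3 + m) beta d j * tv R m r j)).

Lemma T1Q (R : realType) m (d : 'I_(3 + m) -> R) lam : (forall j, 0 < d j) ->
  T1 R m *m Qt d lam = X3 d lam *m T1 R m.
Proof.
move=> hd; apply/matrixP => r i; rewrite !mxE.
rewrite /X3 /Qt /T1; under eq_bigr do rewrite !mxE.
under [RHS]eq_bigr do rewrite !mxE.
rewrite /tv Q_inv // -/(tv R m r i).
rewrite !big_ord_recl big_ord0 /=.
case: r => [[|[|[|r]]] hr] //=; rewrite /tv /=.
all: ring.
Qed.


Lemma X3_char (R : realType) m (d : 'I_(3 + m) -> R) lam : (forall j, 0 < d j) ->
  char_poly (X3 d lam) = ('X - 1) * ('X - lam%:P) * ('X - lam%:P).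
Proof.
move=> hd; rewrite char_poly_trig; last first.
  apply/is_trig_mxP => r t hrt; rewrite mxE.
  have -> : ((t : nat) == (r : nat)) = false by apply/negbTE; rewrite neq_ltn hrt orbT.
  have -> : ((t : nat) == 0%N) = false by apply/negbTE; rewrite -lt0n; apply: leq_ltn_trans hrt.
  by rewrite mulr0 mul0r addr0.
rewrite !big_ord_recr big_ord0 /= !mxE /= mul1r !mulr1 !mul0r !addr0 mul1r.
have -> : \sum_(j < 3 + m) beta d j * tv R m 0 j = 1.
  rewrite -[RHS](@sum_beta R (3 + m) d) //; apply: eq_bigr => j _.
  by rewrite /tv /= !mul0r !addr0 mulr1.
by rewrite mulr1 (_ : lam + (1 - lam) = 1) //; ring.
Qed.

Lemma cs0 (R : realType) k : cs R k 0 = 1.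
Proof. by rewrite /cs mul0r cos0. Qed.
Lemma sn0 (R : realType) k : sn R k 0 = 0.
Proof. by rewrite /sn mul0r sin0. Qed.
Lemma cs2 (R : realType) k : cs R k 2 = 2 * cs R k 1 ^+ 2 - 1.
Proof. have := two_th R k 1; rewrite muln1 => h; rewrite /cs h cos_mulr2n; ring. Qed.
Lemma sn2 (R : realType) k : sn R k 2 = 2 * sn R k 1 * cs R k 1.
Proof. have := two_th R k 1; rewrite muln1 => h; rewrite /sn /cs h sin_mulr2n; ring. Qed.

Lemma T1l_det (R : realType) m :
  \det (lsubmx (T1 R m)) = 2 * sn R (3 + m) 1 * (1 - cs R (3 + m) 1).
Proof.
rewrite (expand_det_row _ 0) !big_ord_recl big_ord0 /cofactor.
rewrite !(expand_det_row _ 0) !big_ord_recl !big_ord0 /cofactor !det_mx11 !mxE /=.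
rewrite /bump /= /tv /= cs0 sn0 cs2 sn2; ring.
Qed.

Lemma Tm_unit (R : realType) m : Tm R m \in unitmx.
Proof.
have -> : Tm R m = block_mx (lsubmx (T1 R m)) (rsubmx (T1 R m)) 0 1%:M.
  by rewrite /Tm /block_mx hsubmxK.
rewrite unitmxE det_ublock det1 mulr1 T1l_det unitfE.
have s1 : 0 < sn R (3 + m) 1 by rewrite /sn mul1r th_sin_gt0.
have c1 : cs R (3 + m) 1 < 1.
  rewrite lt_neqAle /cs cos_le1 andbT; apply/eqP => h.
  have := cos2Dsin2 (1%:R * th R (3 + m)); rewrite h expr1n => /eqP.
  rewrite -subr_eq0 addrC addrA addNr add0r sqrf_eq0 => /eqP h2.
  by move: s1; rewrite /sn h2 ltxx.
by rewrite !mulf_neq0 // ?gt_eqF // subr_gt0.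
Qed.

Definition Mm (R : realType) m (d : 'I_(3 + m) -> R) lam : 'M[R]_(3 + m) :=
  Tm R m *m Qt d lam *m invmx (Tm R m).

Lemma Mm_block (R : realType) m (d : 'I_(3 + m) -> R) lam : (forall j, 0 < d j) ->
  Mm d lam = block_mx (X3 d lam) 0 (dlsubmx (Mm d lam)) (drsubmx (Mm d lam)).
Proof.
move=> hd.
have hu : usubmx (Mm d lam) = row_mx (X3 d lam) 0.
  rewrite /Mm /Tm -!mulmxA mul_col_mx col_mxKu mulmxA T1Q // -mulmxA.
  have : usubmx (Tm R m *m invmx (Tm R m)) = usubmx (1%:M : 'M[R]_(3 + m)).
    by rewrite mulmxV // Tm_unit.
  rewrite /Tm mul_col_mx col_mxKu => ->.
  by rewrite (scalar_mx_block 3 m) /block_mx col_mxKu mul_mx_row mulmx1 mulmx0.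
rewrite -[LHS]submxK; congr block_mx.
- by rewrite /ulsubmx hu row_mxKl.
- by rewrite /ursubmx hu row_mxKr.
Qed.

Lemma Q_char (R : realType) m (d : 'I_(3 + m) -> R) lam : (forall j, 0 < d j) ->
  char_poly (Qt d lam) =
  ('X - 1) * ('X - lam%:P) * ('X - lam%:P) * char_poly (drsubmx (Mm d lam)).
Proof.
move=> hd; rewrite -(char_poly_conj (Qt d lam) (Tm_unit R m)) -/(Mm d lam).
by rewrite (Mm_block lam hd) char_poly_lblock X3_char // block_mxKdr.
Qed.


Lemma cV_neq0 (F : nzRingType) k (v : 'cV[F]_k) : v != 0 -> exists j, v j 0 != 0.
Proof.
move=> v0; apply/existsP; apply: contraR v0 => /existsPn h.
apply/eqP/matrixP => i j; rewrite ord1 mxE; apply/eqP; exact: negbNE (h i).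
Qed.

Lemma Y_eig (R : realType) m (d : 'I_(3 + m) -> R) lam (z : R[i]) :
  (forall j, 0 < d j) -> 0 < lam ->
  root (char_poly (map_mx (real_complex R) (drsubmx (Mm d lam)))) z -> `|z| < lam%:C.
Proof.
move=> hd lam0; set f := real_complex R.
set Y := drsubmx (Mm d lam); set Yc := map_mx f Y.
rewrite -char_poly_tr -eigenvalue_root_char => /eigenvalueP [v hv v0].
pose y := v^T.
have hy : Yc *m y = z *: y by rewrite /y -[Yc]trmxK -trmx_mul hv linearZ.
set Tc := map_mx f (Tm R m).
have Tcu : Tc \in unitmx by rewrite map_unitmx Tm_unit.
set Qc := map_mx f (Qt d lam).
set Mc := map_mx f (Mm d lam).
have hM : Mc = Tc *m Qc *m invmx Tc by rewrite /Mc /Mm !map_mxM map_invmx.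
have hMb : Mc = block_mx (map_mx f (X3 d lam)) 0 (map_mx f (dlsubmx (Mm d lam))) Yc.
  by rewrite /Mc {1}(Mm_block lam hd) map_block_mx map_mx0.
pose x := invmx Tc *m col_mx 0 y.
have hTx : Tc *m x = col_mx 0 y by rewrite /x mulKVmx.
have hQx : Qc *m x = z *: x.
  have -> : Qc = invmx Tc *m Mc *m Tc by rewrite hM !mulmxA mulVmx // mul1mx -mulmxA mulVmx // mulmx1.
  rewrite -!mulmxA hTx hMb mul_block_col !mul0mx !mulmx0 !addr0 add0r hy.
  by rewrite /x scalemxAr scale_col_mx scaler0.
have x0 : x != 0.
  apply: contraNneq v0 => hx; move: hTx; rewrite hx mulmx0 => /esym/eqP.
  rewrite -col_mx0 => /eqP /eq_col_mx [_ h0].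
  by rewrite -[v]trmxK -/y h0 trmx0.
have hT1 : map_mx f (T1 R m) *m x = 0.
  have := congr1 usubmx hTx; rewrite col_mxKu /Tc /Tm map_col_mx mul_col_mx col_mxKu //.
have hs : forall r : 'I_3, \sum_(j < 3 + m) (tv R m r j)%:C * x j 0 = 0.
  move=> r; move/matrixP: hT1 => /(_ r 0); rewrite !mxE => h; rewrite -[RHS]h.
  by apply: eq_bigr => j _; rewrite !mxE.
apply: (@Q_eig R (3 + m) d lam (fun j => x j 0) z) => //.
- exact: cV_neq0.
- have := hs 0; rewrite /tv /=; under eq_bigr do rewrite !mul0r !addr0 rmorph1 mul1r; done.
- have := hs (@Ordinal 3 1 isT); rewrite /tv /=; under eq_bigr do rewrite add0r mul1r mul0r addr0; done.
- have := hs (@Ordinal 3 2 isT); rewrite /tv /=; under eq_bigr do rewrite mul0r !add0r mul1r; done.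
- move=> i; move/matrixP: hQx => /(_ i 0); rewrite !mxE => <-.
  by apply: eq_bigr => j _; rewrite !mxE.
Qed.

Lemma divDk k i : (0 < k)%N -> ((k + i) %/ k = 1 + i %/ k)%N.
Proof. by move=> k0; rewrite -{1}[k]mul1n divnMDl. Qed.
Lemma modDk k i : ((k + i) %% k = i %% k)%N.
Proof. by rewrite -{1}[k]mul1n modnMDl. Qed.



Unset Implicit Arguments.

Theorem lemma2 (R : realType) (n : nat) (d : 'I_n -> R) (lam : R)
  (hn : (3 <= n)%N) (hd : forall j, 0 < d j)
  (hlam1 : 1 / 4 < lam) (hlam2 : lam < 1) :
  exists q : {poly R[i]},
    char_poly (SmatC d lam) = ('X - 1) * ('X - lam%:C%:P) ^+ 2 * q /\
    forall z : R[i], root q z -> `|z| < lam%:C.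
Proof.
case: n d hn hd => [|[|[|m]]] d hn hd //.
have lam0 : 0 < lam by apply: lt_trans hlam1; rewrite divr_gt0.
have k0 : (0 < m.+3)%N by [].
pose S := (SmatC d lam : 'M[R[i]]_(m.+3 + 3 * m.+3)).
have hur : ursubmx S = 0.
  apply/matrixP => i j; rewrite !mxE /= divn_small // modn_small // divDk //.
have hul : ulsubmx S = (map_mx (real_complex R) (Qt d lam))^T.
  apply/matrixP => i j; rewrite !mxE /= !divn_small // !modn_small //.
have hdr : forall i k : 'I_(3 * m.+3), drsubmx S i k =
    (Sentry d lam (1 + i %/ m.+3) (i %% m.+3) (1 + k %/ m.+3) (k %% m.+3))%:C.
  by move=> i k; rewrite !mxE /= !divDk // !modDk.
set Y := drsubmx (Mm d lam).
exists (char_poly (map_mx (real_complex R) Y) * char_poly (drsubmx S)); split.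
  change (char_poly S = ('X - 1) * ('X - lam%:C%:P) ^+ 2 *
     (char_poly (map_mx (real_complex R) Y) * char_poly (drsubmx S))).
  rewrite -[S]submxK hur char_poly_lblock block_mxKdr hul char_poly_tr.
  rewrite -map_char_poly Q_char // -map_char_poly.
  rewrite !rmorphM !rmorphB /= !map_polyX !map_polyC /= rmorph1.
  by rewrite expr2 !mulrA.
move=> z; rewrite rootM => /orP [hz|hz].
  exact: (Y_eig hd lam0 hz).
apply: (@B_eig R m.+3 d lam (drsubmx S) z) => //.
by rewrite eigenvalue_root_char.
Qed.
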